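(* Let $S$ be an abundant semigroup and $S^0$ a quasi-ideal adequate transversal of $S$ (i.e. an adequate transversal with $S^0SS^0\subseteq S^0$). Let $R=\{x\in S:e_x=e_{\bar x}\}$ and $L=\{x\in S: f_x=f_{\bar x}\}$. Then $L$ and $R$ are subsemigroups of $S$, $L$ is left adequate, $R$ is right adequate, and $S^0$ is a quasi-ideal adequate transversal of both $L$ and $R$.
   Context: For a semigroup $S$, $\mathcal{R}^\ast=\{(a,b): \text{for all } x,y\in S^1,\ xa=ya \iff xb=yb\}$ and $\mathcal{L}^\ast$ dually. $S$ is abundant if every $\mathcal{R}^\ast$-class and $\mathcal{L}^\ast$-class contains an idempotent; adequate if abundant with commuting idempotents; left (resp. right) adequate if abundant and every $\mathcal{R}^\ast$-class (resp. $\mathcal{L}^\ast$-class) contains a unique idempotent. In an adequate semigroup $a^+,a^\ast$ are the unique idempotents $\mathcal{R}^\ast$-, resp. $\mathcal{L}^\ast$-related to $a$. A subsemigroup $U$ of abundant $S$ is a $\ast$-subsemigroup if $U$ is abundant and $\mathcal{L}^\ast_U=\mathcal{L}^\ast_S\cap(U\times U)$, $\mathcal{R}^\ast_U=\mathcal{R}^\ast_S\cap(U\times U)$. An adequate $\ast$-subsemigroup $S^0$ of abundant $S$ is an adequate transversal if for each $x\in S$ there is a unique $\bar x\in S^0$ and idempotents $e,f$ of $S$ with $x=e\bar xf$, $e\,\mathcal{L}\,\bar x^+$, $f\,\mathcal{R}\,\bar x^\ast$ ($\mathcal{L},\mathcal{R}$ Green's relations); these $e,f$ are unique and denoted $e_x,f_x$.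 A quasi-ideal adequate transversal is one with $S^0SS^0\subseteq S^0$. *)

(* Defs.v *)
Set Implicit Arguments.

Section Semigroups.
Context {T : Type}.
Variable mul : T -> T -> T.

(* Membership in A^1 : None plays the role of the adjoined identity 1. *)
Definition in1 (A : T -> Prop) (x : option T) : Prop :=
  match x with None => True | Some y => A y end.
Definition lmul (x : option T) (a : T) : T :=
  match x with None => a | Some y => mul y a end.
Definition rmul (a : T) (x : option T) : T :=
  match x with None => a | Some y => mul a y end.

Definition idem (e : T) : Prop := mul e e = e.

Definition Rstar (A : T -> Prop) (a b : T) : Prop :=
  forall x y, in1 A x -> in1 A y ->
    (lmul x a = lmul y a <-> lmul x b = lmul y b).
Definition Lstar (A : T -> Prop) (a b : T) : Prop :=
  forall x y, in1 A x -> in1 A y ->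
    (rmul a x = rmul a y <-> rmul b x = rmul b y).

Definition GreenL (A : T -> Prop) (a b : T) : Prop :=
  exists x y, in1 A x /\ in1 A y /\ a = lmul x b /\ b = lmul y a.
Definition GreenR (A : T -> Prop) (a b : T) : Prop :=
  exists x y, in1 A x /\ in1 A y /\ a = rmul b x /\ b = rmul a y.

Definition subsemigroup (B A : T -> Prop) : Prop :=
  (forall x, B x -> A x) /\ (forall x y, B x -> B y -> B (mul x y)).

Definition abundant (A : T -> Prop) : Prop :=
  forall a, A a ->
    (exists e, A e /\ idem e /\ Rstar A a e) /\
    (exists f, A f /\ idem f /\ Lstar A a f).

Definition adequate (A : T -> Prop) : Prop :=
  abundant A /\
  (forall e f, A e -> A f -> idem e -> idem f -> mul e f = mul f e).

Definition left_adequate (A : T -> Prop) : Prop :=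
  abundant A /\
  (forall a e f, A a -> A e -> A f -> idem e -> idem f ->
     Rstar A a e -> Rstar A a f -> e = f).

Definition right_adequate (A : T -> Prop) : Prop :=
  abundant A /\
  (forall a e f, A a -> A e -> A f -> idem e -> idem f ->
     Lstar A a e -> Lstar A a f -> e = f).

Definition star_subsemigroup (U A : T -> Prop) : Prop :=
  subsemigroup U A /\ abundant U /\
  (forall a b, U a -> U b ->
     (Lstar U a b <-> Lstar A a b) /\ (Rstar U a b <-> Rstar A a b)).

Definition plus_of (U : T -> Prop) (a g : T) : Prop :=
  U g /\ idem g /\ Rstar U a g.
Definition star_of (U : T -> Prop) (a g : T) : Prop :=
  U g /\ idem g /\ Lstar U a g.

Definition decomp (A S0 : T -> Prop) (x xb e f : T) : Prop :=
  S0 xb /\ A e /\ A f /\ idem e /\ idem f /\ x = mul (mul e xb) f /\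
  (exists g, plus_of S0 xb g /\ GreenL A e g) /\
  (exists h, star_of S0 xb h /\ GreenR A f h).

Definition adequate_transversal (S0 A : T -> Prop) : Prop :=
  adequate S0 /\ star_subsemigroup S0 A /\
  (forall x, A x ->
     exists xb, (exists e f, decomp A S0 x xb e f) /\
       (forall xb', (exists e f, decomp A S0 x xb' e f) -> xb' = xb)).

Definition qi_adequate_transversal (S0 A : T -> Prop) : Prop :=
  adequate_transversal S0 A /\
  (forall a b c, S0 a -> A b -> S0 c -> S0 (mul (mul a b) c)).

Definition Rset (A S0 : T -> Prop) (x : T) : Prop :=
  A x /\ exists xb e f xbb e' f',
    decomp A S0 x xb e f /\ decomp A S0 xb xbb e' f' /\ e = e'.
Definition Lset (A S0 : T -> Prop) (x : T) : Prop :=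
  A x /\ exists xb e f xbb e' f',
    decomp A S0 x xb e f /\ decomp A S0 xb xbb e' f' /\ f = f'.

End Semigroups.

(* Main.v *)
Require Import Defs.
From Stdlib Require Import FunctionalExtensionality PropExtensionality.

Lemma in1_mono {T} {A B : T -> Prop} {u} : (forall y, B y -> A y) -> in1 B u -> in1 A u.
Proof. destruct u; simpl; auto. Qed.

Lemma Rstar_refl {T} {mul : T -> T -> T} {A a} : Rstar mul A a a.
Proof. intros x y _ _; tauto. Qed.
Lemma Lstar_refl {T} {mul : T -> T -> T} {A a} : Lstar mul A a a.
Proof. intros x y _ _; tauto. Qed.
Lemma Rstar_sym {T} {mul : T -> T -> T} {A a b} : Rstar mul A a b -> Rstar mul A b a.
Proof. intros H x y Hx Hy; specialize (H x y Hx Hy); tauto. Qed.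
Lemma Lstar_sym {T} {mul : T -> T -> T} {A a b} : Lstar mul A a b -> Lstar mul A b a.
Proof. intros H x y Hx Hy; specialize (H x y Hx Hy); tauto. Qed.
Lemma Rstar_trans {T} {mul : T -> T -> T} {A a b c} :
  Rstar mul A a b -> Rstar mul A b c -> Rstar mul A a c.
Proof. intros H1 H2 x y Hx Hy; specialize (H1 x y Hx Hy); specialize (H2 x y Hx Hy); tauto. Qed.
Lemma Lstar_trans {T} {mul : T -> T -> T} {A a b c} :
  Lstar mul A a b -> Lstar mul A b c -> Lstar mul A a c.
Proof. intros H1 H2 x y Hx Hy; specialize (H1 x y Hx Hy); specialize (H2 x y Hx Hy); tauto. Qed.
Lemma Rstar_mono {T} {mul : T -> T -> T} {A B : T -> Prop} {a b} :
  (forall x, B x -> A x) -> Rstar mul A a b -> Rstar mul B a b.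
Proof. intros HBA H x y Hx Hy; apply H; eapply in1_mono; eauto. Qed.
Lemma Lstar_mono {T} {mul : T -> T -> T} {A B : T -> Prop} {a b} :
  (forall x, B x -> A x) -> Lstar mul A a b -> Lstar mul B a b.
Proof. intros HBA H x y Hx Hy; apply H; eapply in1_mono; eauto. Qed.
Lemma Rstar_idem {T} {mul : T -> T -> T} (A : T -> Prop) {e f} :
  A e -> idem mul e -> Rstar mul A e f -> mul e f = f.
Proof. intros Ha Hi H. apply (proj1 (H (Some e) None Ha I)). exact Hi. Qed.
Lemma Lstar_idem {T} {mul : T -> T -> T} (A : T -> Prop) {e f} :
  A e -> idem mul e -> Lstar mul A e f -> mul f e = f.
Proof. intros Ha Hi H. apply (proj1 (H (Some e) None Ha I)). exact Hi. Qed.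

Section Half.
Variable T : Type.
Variable mul : T -> T -> T.
Hypothesis assoc : forall a b c, mul a (mul b c) = mul (mul a b) c.
Variable S0 : T -> Prop.
Hypothesis hS0 : qi_adequate_transversal mul S0 (fun _ => True).

Local Notation Top := (fun _ : T => True).
Local Infix "·" := mul (at level 40, left associativity).

Lemma use2 {a b c} (H : a·b = c) r : a·(b·r) = c·r.
Proof. rewrite assoc, H; reflexivity. Qed.

Ltac norm := repeat rewrite <- assoc.
Ltac normin H := repeat rewrite <- assoc in H.
Ltac rw H := repeat (first [rewrite (use2 H) | rewrite H]).
Ltac rwin H H' := repeat (first [rewrite (use2 H) in H' | rewrite H in H']).

Lemma lmul_assoc u a b : lmul mul u (a·b) = lmul mul u a · b.
Proof. destruct u; simpl; auto. Qed.
Lemma rmul_assoc a b u : rmul mul (a·b) u = a · rmul mul b u.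
Proof. destruct u; simpl; [symmetry; apply assoc | reflexivity]. Qed.

Lemma S0_mul a b : S0 a -> S0 b -> S0 (a·b).
Proof. destruct hS0 as ((_ & ((_ & Hcl) & _) & _) & _). exact (Hcl a b). Qed.
Lemma S0_comm e f : S0 e -> S0 f -> idem mul e -> idem mul f -> e·f = f·e.
Proof. destruct hS0 as (((_ & Hc) & _ & _) & _). exact (Hc e f). Qed.
Lemma S0_qi a b c : S0 a -> S0 c -> S0 (a·b·c).
Proof. destruct hS0 as [_ Hqi]. intros; apply Hqi; auto. Qed.
Lemma S0_Rstar a b : S0 a -> S0 b -> Rstar mul S0 a b -> Rstar mul Top a b.
Proof. destruct hS0 as ((_ & (_ & _ & Heq) & _) & _). intros Ha Hb. exact (proj1 (proj2 (Heq a b Ha Hb))). Qed.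
Lemma S0_Lstar a b : S0 a -> S0 b -> Lstar mul S0 a b -> Lstar mul Top a b.
Proof. destruct hS0 as ((_ & (_ & _ & Heq) & _) & _). intros Ha Hb. exact (proj1 (proj1 (Heq a b Ha Hb))). Qed.
Lemma S0_plus a : S0 a -> exists g, S0 g /\ idem mul g /\ Rstar mul Top a g.
Proof.
  destruct hS0 as (((Hab & _) & _ & _) & _). intros Ha.
  destruct (Hab a Ha) as [[g [Hg [Ig HR]]] _]. exists g; split; [exact Hg|]; split; [exact Ig|].
  apply S0_Rstar; auto.
Qed.
Lemma S0_star a : S0 a -> exists g, S0 g /\ idem mul g /\ Lstar mul Top a g.
Proof.
  destruct hS0 as (((Hab & _) & _ & _) & _). intros Ha.
  destruct (Hab a Ha) as [_ [g [Hg [Ig HR]]]]. exists g; split; [exact Hg|]; split; [exact Ig|].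
  apply S0_Lstar; auto.
Qed.

Definition D x xb e f : Prop :=
  S0 xb /\ idem mul e /\ idem mul f /\ x = e·xb·f /\
  (exists g, S0 g /\ idem mul g /\ Rstar mul Top xb g /\ e·g = e /\ g·e = g) /\
  (exists h, S0 h /\ idem mul h /\ Lstar mul Top xb h /\ f·h = h /\ h·f = f).

Lemma decomp_D x xb e f : decomp mul Top S0 x xb e f -> D x xb e f.
Proof.
  intros (Hxb & _ & _ & Hie & Hif & Hx & (g & (Hg & Ig & HRg) & (u & v & _ & _ & Hu & Hv))
          & (h & (Hh & Ih & HLh) & (u' & v' & _ & _ & Hu' & Hv'))).
  unfold idem in *.
  refine (conj Hxb (conj Hie (conj Hif (conj Hx (conj _ _))))).
  - exists g. split; [exact Hg|]. split; [exact Ig|]. split; [apply S0_Rstar; auto|]. split.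
    + rewrite Hu. rewrite <- lmul_assoc, Ig. reflexivity.
    + rewrite Hv. rewrite <- lmul_assoc, Hie. reflexivity.
  - exists h. split; [exact Hh|]. split; [exact Ih|]. split; [apply S0_Lstar; auto|]. split.
    + rewrite Hv'. rewrite <- rmul_assoc, Hif. reflexivity.
    + rewrite Hu'. rewrite <- rmul_assoc, Ih. reflexivity.
Qed.

Lemma D_decomp (B : T -> Prop) x xb e f : (forall y, S0 y -> B y) -> B e -> B f ->
  D x xb e f -> decomp mul B S0 x xb e f.
Proof.
  intros HS Be Bf (Hxb & Hie & Hif & Hx & (g & Hg & Ig & HRg & Heg & Hge) & (h & Hh & Ih & HLh & Hfh & Hhf)).
  refine (conj Hxb (conj Be (conj Bf (conj Hie (conj Hif (conj Hx (conj _ _))))))).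
  - exists g. split. { split; [exact Hg|]. split; [exact Ig|]. exact (Rstar_mono (fun y (_ : S0 y) => I) HRg). }
    exists (Some e), (Some g). split; [exact Be|]. split; [exact (HS g Hg)|]. simpl; split; symmetry; assumption.
  - exists h. split. { split; [exact Hh|]. split; [exact Ih|]. exact (Lstar_mono (fun y (_ : S0 y) => I) HLh). }
    exists (Some f), (Some h). split; [exact Bf|]. split; [exact (HS h Hh)|]. simpl; split; symmetry; assumption.
Qed.

Lemma decomp_mono (B A : T -> Prop) x xb e f : (forall y, B y -> A y) ->
  decomp mul B S0 x xb e f -> decomp mul A S0 x xb e f.
Proof.
  intros HBA (H1&H2&H3&H4&H5&H6&(g&Hg&(u&v&Hu&Hv&Hu2&Hv2))&(h&Hh&(u'&v'&Hu'&Hv'&Hu2'&Hv2'))).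
  refine (conj H1 (conj (HBA _ H2) (conj (HBA _ H3) (conj H4 (conj H5 (conj H6 (conj _ _))))))).
  - exists g. split; [exact Hg|]. exists u, v. split; [eapply in1_mono; eauto|].
    split; [eapply in1_mono; eauto|]. auto.
  - exists h. split; [exact Hh|]. exists u', v'. split; [eapply in1_mono; eauto|].
    split; [eapply in1_mono; eauto|]. auto.
Qed.

Lemma D_bar x xb e f xb' e' f' : D x xb e f -> D x xb' e' f' -> xb = xb'.
Proof.
  intros H1 H2. destruct hS0 as ((_ & _ & Htr) & _).
  destruct (Htr x I) as [xb0 [_ Hu]].
  assert (E1 : xb = xb0) by (apply Hu; exists e, f; apply (D_decomp Top); auto).
  assert (E2 : xb' = xb0) by (apply Hu; exists e', f'; apply (D_decomp Top); auto).
  congruence.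
Qed.

Lemma plus_uniq a g g' : S0 g -> S0 g' -> idem mul g -> idem mul g' ->
  Rstar mul Top a g -> Rstar mul Top a g' -> g = g'.
Proof.
  intros Hg Hg' Ig Ig' H1 H2.
  assert (H5 : Rstar mul Top g g') by (eapply Rstar_trans; [apply Rstar_sym; exact H1 | exact H2]).
  assert (E1 : g·g' = g') by (apply (Rstar_idem Top); auto).
  assert (E2 : g'·g = g) by (apply (Rstar_idem Top); auto using Rstar_sym).
  transitivity (g'·g); [symmetry; exact E2|]. rewrite (S0_comm g' g); auto.
Qed.

Lemma star_uniq a h h' : S0 h -> S0 h' -> idem mul h -> idem mul h' ->
  Lstar mul Top a h -> Lstar mul Top a h' -> h = h'.
Proof.
  intros Hh Hh' Ih Ih' H1 H2.
  assert (H5 : Lstar mul Top h h') by (eapply Lstar_trans; [apply Lstar_sym; exact H1 | exact H2]).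
  assert (E1 : h'·h = h') by (apply (Lstar_idem Top); auto).
  assert (E2 : h·h' = h) by (apply (Lstar_idem Top); auto using Lstar_sym).
  transitivity (h·h'); [symmetry; exact E2|]. rewrite (S0_comm h h'); auto.
Qed.

Lemma D_R x xb e f : D x xb e f -> Rstar mul Top x e.
Proof.
  intros (Hxb & Hie & Hif & Hx & (g & Hg & Ig & HRg & Heg & Hge) & (h & Hh & Ih & HLh & Hfh & Hhf)).
  assert (Hxh : xb·h = xb) by (apply (Lstar_idem Top); auto using Lstar_sym).
  intros u v _ _. subst x. rewrite !lmul_assoc.
  assert (HU : lmul mul u e · g = lmul mul u e) by (rewrite <- lmul_assoc, Heg; reflexivity).
  assert (HV : lmul mul v e · g = lmul mul v e) by (rewrite <- lmul_assoc, Heg; reflexivity).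
  split; intro H.
  - apply (f_equal (fun t => t·h)) in H. simpl in H. normin H.
    rewrite !Hfh, !Hxh in H.
    apply (proj1 (HRg (Some (lmul mul u e)) (Some (lmul mul v e)) I I)) in H.
    simpl in H. rewrite HU, HV in H. exact H.
  - rewrite H. reflexivity.
Qed.

Lemma D_L x xb e f : D x xb e f -> Lstar mul Top x f.
Proof.
  intros (Hxb & Hie & Hif & Hx & (g & Hg & Ig & HRg & Heg & Hge) & (h & Hh & Ih & HLh & Hfh & Hhf)).
  assert (Hgx : g·xb = xb) by (apply (Rstar_idem Top); auto using Rstar_sym).
  intros u v _ _. subst x. rewrite !rmul_assoc.
  assert (HU : h · rmul mul f u = rmul mul f u) by (rewrite <- rmul_assoc, Hhf; reflexivity).
  assert (HV : h · rmul mul f v = rmul mul f v) by (rewrite <- rmul_assoc, Hhf; reflexivity).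
  split; intro H.
  - apply (f_equal (fun t => g·t)) in H. simpl in H. normin H.
    rwin Hge H. rwin Hgx H.
    apply (proj1 (HLh (Some (rmul mul f u)) (Some (rmul mul f v)) I I)) in H.
    simpl in H. rewrite HU, HV in H. exact H.
  - rewrite H. reflexivity.
Qed.

Lemma D_uniq x xb e f xb' e' f' : D x xb e f -> D x xb' e' f' -> xb = xb' /\ e = e' /\ f = f'.
Proof.
  intros H1 H2. pose proof (D_bar _ _ _ _ _ _ _ H1 H2) as E. subst xb'.
  pose proof (D_R _ _ _ _ H1) as R1. pose proof (D_R _ _ _ _ H2) as R2.
  pose proof (D_L _ _ _ _ H1) as L1. pose proof (D_L _ _ _ _ H2) as L2.
  destruct H1 as (Hxb & Hie & Hif & Hx & (g & Hg & Ig & HRg & Heg & Hge) & (h & Hh & Ih & HLh & Hfh & Hhf)).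
  destruct H2 as (_ & Hie' & Hif' & Hx' & (g' & Hg' & Ig' & HRg' & Heg' & Hge') & (h' & Hh' & Ih' & HLh' & Hfh' & Hhf')).
  assert (Eg : g = g') by (apply (plus_uniq xb); auto). subst g'.
  assert (Eh : h = h') by (apply (star_uniq xb); auto). subst h'.
  split; [reflexivity|]. split.
  - assert (H : Rstar mul Top e e') by (eapply Rstar_trans; [apply Rstar_sym; exact R1 | exact R2]).
    assert (E : e·e' = e') by (apply (Rstar_idem Top); auto).
    rewrite <- E. rewrite <- Heg at 2. rewrite <- assoc, Hge'. symmetry; exact Heg.
  - assert (H : Lstar mul Top f' f) by (eapply Lstar_trans; [apply Lstar_sym; exact L2 | exact L1]).
    assert (E : f·f' = f) by (apply (Lstar_idem Top); auto).
    rewrite <- E. rewrite <- Hhf'. rewrite assoc, Hfh. reflexivity.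
Qed.

Lemma D_S0 a : S0 a -> exists g h, D a a g h /\ S0 h /\ idem mul h /\ Lstar mul Top a h.
Proof.
  intros Ha.
  destruct (S0_plus a Ha) as (g & Hg & Ig & HRg).
  destruct (S0_star a Ha) as (h & Hh & Ih & HLh).
  assert (Hga : g·a = a) by (apply (Rstar_idem Top); auto using Rstar_sym).
  assert (Hah : a·h = a) by (apply (Lstar_idem Top); auto using Lstar_sym).
  exists g, h. split; [|auto].
  split; [exact Ha|]. split; [exact Ig|]. split; [exact Ih|]. split.
  { rewrite Hga, Hah; reflexivity. }
  split.
  - exists g. split; [exact Hg|]. split; [exact Ig|]. split; [exact HRg|]. split; exact Ig.
  - exists h. split; [exact Hh|]. split; [exact Ih|]. split; [exact HLh|]. split; exact Ih.
Qed.

Lemma D_mul x xb e f y yb e' f' : D x xb e f -> D y yb e' f' ->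
  exists g h, S0 g /\ S0 h /\ D (x·y) (xb·(f·e')·yb) (e·g) (h·f').
Proof.
  intros (Hxb & Hie & Hif & Hx & (gx & Hgx & Igx & HRgx & Hegx & Hgxe) & (hx & Hhx & Ihx & HLhx & Hfhx & Hhxf))
         (Hyb & Hie' & Hif' & Hy & (gy & Hgy & Igy & HRgy & Hegy & Hgye) & (hy & Hhy & Ihy & HLhy & Hfhy & Hhyf)).
  assert (Hz : S0 (xb·(f·e')·yb)) by (apply S0_qi; auto).
  destruct (S0_plus _ Hz) as (g & Hg & Ig & HRg).
  destruct (S0_star _ Hz) as (h & Hh & Ih & HLh).
  exists g, h. split; [exact Hg|]. split; [exact Hh|].
  remember (xb·(f·e')·yb) as z eqn:Ez.
  assert (Hgxxb : gx·xb = xb) by (apply (Rstar_idem Top); auto using Rstar_sym).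
  assert (Hybhy : yb·hy = yb) by (apply (Lstar_idem Top); auto using Lstar_sym).
  assert (Hgxz : gx·z = z) by (rewrite Ez; norm; rw Hgxxb; reflexivity).
  assert (Hgxg : gx·g = g) by (apply (proj1 (HRg (Some gx) None I I)); exact Hgxz).
  assert (Hggx : g·gx = g) by (rewrite (S0_comm g gx); auto).
  assert (Hge : g·e = g) by (rewrite <- Hggx; norm; rw Hgxe; reflexivity).
  assert (Hzhy : z·hy = z) by (rewrite Ez; norm; rw Hybhy; reflexivity).
  assert (Hhhy : h·hy = h) by (apply (proj1 (HLh (Some hy) None I I)); exact Hzhy).
  assert (Hhyh : hy·h = h) by (rewrite <- (S0_comm h hy); auto).
  assert (Hf'h : f'·h = h) by (rewrite <- Hhyh; norm; rw Hfhy; reflexivity).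
  assert (Hgz : g·z = z) by (apply (Rstar_idem Top); auto using Rstar_sym).
  assert (Hzh : z·h = z) by (apply (Lstar_idem Top); auto using Lstar_sym).
  unfold idem in *.
  split; [exact Hz|]. split.
  { unfold idem. norm. rw Hge. rw Ig. reflexivity. }
  split.
  { unfold idem. norm. rw Hf'h. rw Ih. reflexivity. }
  split.
  { rewrite Hx, Hy. norm. rw Hgz. rw Hzh. rewrite Ez. norm. reflexivity. }
  split.
  - exists g. split; [exact Hg|]. split; [exact Ig|]. split; [exact HRg|]. split.
    + norm. rw Ig. reflexivity.
    + rw Hge. rw Ig. reflexivity.
  - exists h. split; [exact Hh|]. split; [exact Ih|]. split; [exact HLh|]. split.
    + norm. rw Hf'h. rw Ih. reflexivity.
    + rw Ih. reflexivity.
Qed.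

Definition LL x : Prop := exists xb e f, D x xb e f /\ S0 f.

Lemma S0_LL a : S0 a -> LL a.
Proof. intros Ha. destruct (D_S0 a Ha) as (g & h & H & Hh & _). exists a, g, h; auto. Qed.

Lemma LL_e x xb e f : D x xb e f -> LL e.
Proof.
  intros (Hxb & Hie & Hif & Hx & (g & Hg & Ig & HRg & Heg & Hge) & _).
  exists g, e, g. split; [|exact Hg].
  split; [exact Hg|]. split; [exact Hie|]. split; [exact Ig|]. split.
  { rewrite !Heg. reflexivity. }
  split.
  - exists g. split; [exact Hg|]. split; [exact Ig|]. split; [exact Rstar_refl|]. split; assumption.
  - exists g. split; [exact Hg|]. split; [exact Ig|]. split; [exact Lstar_refl|]. split; exact Ig.
Qed.

Lemma LL_idem e : LL e -> idem mul e ->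
  exists p, S0 p /\ idem mul p /\ e·p = e /\ p·e = p /\ D e p e p.
Proof.
  intros (xb & e0 & f0 & De & Hf0) Ie.
  pose proof (D_L _ _ _ _ De) as HL.
  assert (If0 : idem mul f0) by (destruct De as (_&_&H&_); exact H).
  assert (E1 : f0·e = f0) by (apply (Lstar_idem Top); auto).
  assert (E2 : e·f0 = e) by (apply (Lstar_idem Top); auto using Lstar_sym).
  exists f0. split; [exact Hf0|]. split; [exact If0|]. split; [exact E2|]. split; [exact E1|].
  split; [exact Hf0|]. split; [exact Ie|]. split; [exact If0|]. split.
  { rewrite !E2. reflexivity. }
  split.
  - exists f0. split; [exact Hf0|]. split; [exact If0|]. split; [exact Rstar_refl|]. split; assumption.
  - exists f0. split; [exact Hf0|]. split; [exact If0|]. split; [exact Lstar_refl|]. split; exact If0.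
Qed.

Lemma Lset_LL x : Lset mul Top S0 x <-> LL x.
Proof.
  split.
  - intros [_ (xb & e & f & xbb & e' & f' & H1 & H2 & Hff)].
    apply decomp_D in H1. apply decomp_D in H2.
    assert (Hxb : S0 xb) by (destruct H1; assumption).
    destruct (D_S0 xb Hxb) as (g & h & H3 & Hh & _).
    destruct (D_uniq _ _ _ _ _ _ _ H2 H3) as (_ & _ & E).
    exists xb, e, f. split; [exact H1|]. rewrite Hff, E; exact Hh.
  - intros (xb & e & f & H1 & Hf).
    pose proof H1 as (Hxb & _ & Hif & _ & _ & (h & Hh & Ih & HLh & Hfh & Hhf)).
    assert (E : f = h).
    { transitivity (h·f); [symmetry; exact Hhf|]. rewrite (S0_comm h f Hh Hf Ih Hif). exact Hfh. }
    destruct (D_S0 xb Hxb) as (g' & h' & H3 & Hh' & Ih' & HLh').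
    assert (E' : h = h') by (apply (star_uniq xb); auto).
    split; [exact I|]. exists xb, e, f, xb, g', h'. split.
    { apply (D_decomp Top); auto. }
    split. { apply (D_decomp Top); auto. }
    congruence.
Qed.

Lemma LL_eq : Lset mul Top S0 = LL.
Proof. apply functional_extensionality; intros x; apply propositional_extensionality; apply Lset_LL. Qed.

Lemma half : subsemigroup mul (Lset mul Top S0) Top /\ left_adequate mul (Lset mul Top S0) /\
  qi_adequate_transversal mul S0 (Lset mul Top S0).
Proof.
  rewrite LL_eq.
  split; [|split].
  - split; [intros; exact I|].
    intros x y (xb & e & f & H1 & Hf) (yb & e' & f' & H2 & Hf').
    destruct (D_mul _ _ _ _ _ _ _ _ H1 H2) as (g & h & Hg & Hh & H3).
    exists (xb·(f·e')·yb), (e·g), (h·f'). split; [exact H3|]. apply S0_mul; auto.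
  - split.
    + intros a (ab & e & f & H1 & Hf). split.
      * exists e. split; [exact (LL_e _ _ _ _ H1)|].
        split; [destruct H1 as (_&H&_); exact H|].
        exact (Rstar_mono (fun y (_ : LL y) => I) (D_R _ _ _ _ H1)).
      * exists f. split; [exact (S0_LL f Hf)|].
        split; [destruct H1 as (_&_&H&_); exact H|].
        exact (Lstar_mono (fun y (_ : LL y) => I) (D_L _ _ _ _ H1)).
    + intros a e f Ha He Hf Ie If H1 H2.
      assert (H3 : Rstar mul LL e f) by (eapply Rstar_trans; [apply Rstar_sym; exact H1 | exact H2]).
      assert (Eef : e·f = f) by (apply (Rstar_idem LL); auto).
      assert (Efe : f·e = e) by (apply (Rstar_idem LL); auto using Rstar_sym).
      destruct (LL_idem e He Ie) as (p & Hp & Ip & Hep & Hpe & Dp).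
      destruct (LL_idem f Hf If) as (q & Hq & Iq & Hfq & Hqf & Dq).
      unfold idem in Ip, Iq.
      destruct (D_mul _ _ _ _ _ _ _ _ Dp Dq) as (g1 & h1 & _ & _ & D1).
      rewrite Eef in D1.
      pose proof (D_bar _ _ _ _ _ _ _ D1 Dq) as Z1.
      destruct (D_mul _ _ _ _ _ _ _ _ Dq Dp) as (g2 & h2 & _ & _ & D2).
      rewrite Efe in D2.
      pose proof (D_bar _ _ _ _ _ _ _ D2 Dp) as Z2.
      normin Z1. rewrite (use2 Ip) in Z1.
      normin Z2. rewrite (use2 Iq) in Z2.
      assert (Epq : p·q = q).
      { transitivity (p·(p·(f·q))); [rewrite Z1; reflexivity | rw Ip; exact Z1]. }
      assert (Eqp : q·p = p).
      { transitivity (q·(q·(e·p))); [rewrite Z2; reflexivity | rw Iq; exact Z2]. }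
      assert (E : p = q).
      { rewrite <- Eqp. rewrite (S0_comm q p); auto. }
      subst q.
      rewrite <- Eef. transitivity ((e·p)·f).
      * rewrite <- assoc, Hqf, Hep. reflexivity.
      * rewrite Hep. reflexivity.
  - destruct hS0 as ((Hadeq & ((Hincl & Hcl) & Hab & Heq) & Htr) & Hqi).
    split; [split; [exact Hadeq|]; split|].
    + split; [split; [exact S0_LL | exact Hcl]|]. split; [exact Hab|].
      intros a b Ha Hb. destruct (Heq a b Ha Hb) as [HL HR].
      split; split; intro H.
      * apply (Lstar_mono (A:=Top)); [intros; exact I|]. apply HL; exact H.
      * apply (Lstar_mono (A:=LL)); [exact S0_LL|]. exact H.
      * apply (Rstar_mono (A:=Top)); [intros; exact I|]. apply HR; exact H.
      * apply (Rstar_mono (A:=LL)); [exact S0_LL|]. exact H.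
    + intros x (xb & e & f & H1 & Hf). exists xb. split.
      * exists e, f. apply D_decomp; [exact S0_LL | exact (LL_e _ _ _ _ H1) | exact (S0_LL f Hf) | exact H1].
      * intros xb' (e' & f' & H2). apply (decomp_mono LL Top) in H2; [| intros; exact I].
        apply decomp_D in H2. exact (D_bar _ _ _ _ _ _ _ H2 H1).
    + intros a b c Ha Hb Hc. exact (Hqi a b c Ha I Hc).
Qed.

End Half.

Lemma decomp_flip T (mul : T -> T -> T) (assoc : forall a b c, mul a (mul b c) = mul (mul a b) c)
  A S0 x xb e f :
  decomp (fun a b => mul b a) A S0 x xb e f <-> decomp mul A S0 x xb f e.
Proof.
  split.
  - intros (H1 & H2 & H3 & H4 & H5 & H6 & (g & Hg & HgL) & (h & Hh & HhR)).
    split; [exact H1|]. split; [exact H3|]. split; [exact H2|]. split; [exact H5|]. split; [exact H4|].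
    split. { rewrite H6. first [apply assoc | symmetry; apply assoc]. }
    split. { exists h. exact (conj Hh HhR). } { exists g. exact (conj Hg HgL). }
  - intros (H1 & H2 & H3 & H4 & H5 & H6 & (g & Hg & HgL) & (h & Hh & HhR)).
    split; [exact H1|]. split; [exact H3|]. split; [exact H2|]. split; [exact H5|]. split; [exact H4|].
    split. { rewrite H6. first [apply assoc | symmetry; apply assoc]. }
    split. { exists h. exact (conj Hh HhR). } { exists g. exact (conj Hg HgL). }
Qed.

Lemma abundant_flip T (mul : T -> T -> T) A : abundant mul A -> abundant (fun a b => mul b a) A.
Proof.
  intros H a Ha. destruct (H a Ha) as [[e He] [f Hf]]. split; [exists f; exact Hf | exists e; exact He].
Qed.

Lemma qi_flip T (mul : T -> T -> T) (assoc : forall a b c, mul a (mul b c) = mul (mul a b) c) S0 A :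
  qi_adequate_transversal mul S0 A -> qi_adequate_transversal (fun a b => mul b a) S0 A.
Proof.
  intros ((Hadeq & ((Hincl & Hcl) & Hab & Heq) & Htr) & Hqi).
  destruct Hadeq as [HabS Hcomm].
  split; [split; [|split]|].
  - split; [apply abundant_flip; exact HabS|].
    intros e f He Hf Ie If. cbv beta. symmetry. apply Hcomm; assumption.
  - split; [split; [exact Hincl | intros x y Hx Hy; exact (Hcl y x Hy Hx)]|].
    split; [apply abundant_flip; exact Hab|].
    intros a b Ha Hb. destruct (Heq a b Ha Hb) as [HL HR]. split; [exact HR | exact HL].
  - intros x Hx. destruct (Htr x Hx) as [xb [[e [f Hd]] Hu]]. exists xb. split.
    + exists f, e. apply decomp_flip; [exact assoc | exact Hd].
    + intros xb' [e' [f' Hd']]. apply Hu. exists f', e'. apply (decomp_flip _ _ assoc). exact Hd'.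
  - intros a b c Ha Hb Hc. cbv beta. rewrite assoc. apply Hqi; assumption.
Qed.

Lemma Rset_flip T (mul : T -> T -> T) (assoc : forall a b c, mul a (mul b c) = mul (mul a b) c) A S0 :
  Rset mul A S0 = Lset (fun a b => mul b a) A S0.
Proof.
  apply functional_extensionality; intros x; apply propositional_extensionality.
  split.
  - intros [Hx (xb & e & f & xbb & e' & f' & H1 & H2 & H3)]. split; [exact Hx|].
    exists xb, f, e, xbb, f', e'. split; [apply (decomp_flip _ _ assoc); exact H1|].
    split; [apply (decomp_flip _ _ assoc); exact H2| exact H3].
  - intros [Hx (xb & e & f & xbb & e' & f' & H1 & H2 & H3)]. split; [exact Hx|].
    apply (decomp_flip _ _ assoc) in H1. apply (decomp_flip _ _ assoc) in H2.
    exists xb, f, e, xbb, f', e'. auto.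
Qed.

Theorem theorem2p3 (T : Type) (mul : T -> T -> T)
  (mul_assoc : forall a b c, mul a (mul b c) = mul (mul a b) c)
  (S0 : T -> Prop)
  (hS : abundant mul (fun _ => True))
  (hS0 : qi_adequate_transversal mul S0 (fun _ => True)) :
  let R := Rset mul (fun _ => True) S0 in
  let L := Lset mul (fun _ => True) S0 in
  subsemigroup mul L (fun _ => True) /\ subsemigroup mul R (fun _ => True) /\
  left_adequate mul L /\ right_adequate mul R /\
  qi_adequate_transversal mul S0 L /\ qi_adequate_transversal mul S0 R.
Proof.
  cbv zeta.
  assert (assocf : forall a b c, (fun x y => mul y x) a ((fun x y => mul y x) b c)
                              = (fun x y => mul y x) ((fun x y => mul y x) a b) c).
  { intros a b c. cbv beta. symmetry. apply mul_assoc. }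
  destruct (half T mul mul_assoc S0 hS0) as [HL1 [HL2 HL3]].
  destruct (half T (fun a b => mul b a) assocf S0 (qi_flip T mul mul_assoc S0 _ hS0)) as [HR1 [HR2 HR3]].
  rewrite (Rset_flip T mul mul_assoc).
  split; [exact HL1|]. split.
  { destruct HR1 as [Hi Hc]. split; [exact Hi|]. intros x y Hx Hy. exact (Hc y x Hy Hx). }
  split; [exact HL2|]. split.
  { destruct HR2 as [Hab Hu]. split.
    - exact (abundant_flip T (fun a b => mul b a) _ Hab).
    - exact Hu. }
  split; [exact HL3|].
  exact (qi_flip T (fun a b => mul b a) assocf S0 _ HR3).
Qed.
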